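(* Let $p$ be an odd prime and $d\ge 3$ an integer with $p\nmid d$ and $d\not\equiv 1 \pmod p$. Let $f(x)=x^d+F(x)$ and $f'(x)=x^d+F'(x)$, where $F,F'\in\overline{\mathbb{F}}_p[x]$ are each either $0$ or of degree at most $d-2$, and no monomial appearing in $F$ or $F'$ has an exponent divisible by $p$ (in particular there is no constant term). Suppose $(M,\lambda,h)$ transforms $C_f$ into $C_{f'}$. Then, after normalizing $M$ so that $M(x)=\alpha x+\beta$ (which is possible since $M$ must fix $\infty$), one has $\beta=0$, $\lambda=\alpha^d$ (so $\alpha^{d(p-1)}=1$), and $h$ is a constant lying in $\mathbb{F}_p$. In other words, up to composition with an automorphism $(x,y)\mapsto(x,y+c)$, $c\in\mathbb{F}_p$, the isomorphism is $(x,y)\mapsto(\alpha x,\alpha^d y)$.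
   Context: Let $p$ be an odd prime. For $f\in\overline{\mathbb{F}}_p(x)$ not of the form $z^p-z$ with $z\in\overline{\mathbb{F}}_p(x)$, $C_f$ denotes the Artin–Schreier curve $y^p-y=f(x)$ over $\overline{\mathbb{F}}_p$. For a Möbius transformation $M(x)=\frac{\alpha x+\beta}{\gamma x+\delta}$ ($\alpha,\beta,\gamma,\delta\in\overline{\mathbb{F}}_p$, $\alpha\delta-\beta\gamma\neq0$), $\lambda\in\mathbb{F}_p^\times$ and $h\in\overline{\mathbb{F}}_p(x)$, we say that $(M,\lambda,h)$ transforms $C_f$ into $C_{f'}$ if $f(M(x))=\lambda f'(x)+h(x)^p-h(x)$; equivalently, substituting $x\mapsto M(x)$, $y\mapsto \lambda y+h(x)$ into the equation of $C_f$ yields the equation of $C_{f'}$. *)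

(* Defs.v *)
From HB Require Import structures.
From mathcomp Require Import all_boot all_order all_algebra.
Set Implicit Arguments. Unset Strict Implicit. Unset Printing Implicit Defensive.
Import GRing.Theory.
Local Open Scope ring_scope.

Notation ratfun K := {fraction {poly K}}.

Definition polyF (K : fieldType) (q : {poly K}) : ratfun K := FracField.tofrac q.

Definition constF (K : fieldType) (c : K) : ratfun K := polyF c%:P.

Definition mobius (K : fieldType) (a b c e : K) : ratfun K :=
  polyF (a *: 'X + b%:P) / polyF (c *: 'X + e%:P).

Definition compF (K : fieldType) (f : {poly K}) (m : ratfun K) : ratfun K :=
  (map_poly (@constF K) f).[m].

(* (M, lambda, h) transforms C_f into C_f' :  f(M(x)) = lambda f'(x) + h^p - h,
   where M = (a x + b)/(c x + e) with a e - b c <> 0 and lambda in F_p^x. *)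
Definition transforms (K : fieldType) (p : nat) (a b c e lam : K) (h : ratfun K)
    (f f' : {poly K}) : Prop :=
  [/\ a * e - b * c != 0, lam != 0, lam ^+ p = lam &
      compF f (mobius a b c e) = constF lam * polyF f' + h ^+ p - h].

(* Main.v *)
Require Import Defs.
From HB Require Import structures.
From mathcomp Require Import all_boot all_order all_algebra.
From mathcomp Require Import ring zify.
Import GRing.Theory.
Local Open Scope ring_scope.

Lemma compF_polyF (K : fieldType) (f q : {poly K}) :
  compF f (polyF q) = polyF (f \Po q).
Proof.
rewrite /compF /polyF /comp_poly -horner_map; congr (_.[_]).
by rewrite -map_poly_comp.
Qed.

Lemma lin_exp (K : fieldType) (al be : K) n :
  let q := al *: 'X + be%:P in
  [/\ (q ^+ n.+1)`_n.+1 = al ^+ n.+1,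
      (q ^+ n.+1)`_n = n.+1%:R * al ^+ n * be &
      forall j, (n.+1 < j)%N -> (q ^+ n.+1)`_j = 0].
Proof.
move=> q.
have cq : forall s : {poly K}, forall k, (s * q)`_k = al * (if k == 0%N then 0 else s`_k.-1) + be * s`_k.
  by move=> s k; rewrite /q mulrDr coefD -scalerAr coefZ coefMX coefMC [_ * be]mulrC.
elim: n => [|n [IH1 IH2 IH3]].
  rewrite expr1 /q !coefD !coefZ !coefC !coefX /=; split => //.
  - by rewrite mulr1 addr0 expr1.
  - by rewrite mulr0 add0r mul1r expr0 mul1r.
  - move=> j hj; rewrite coefD coefZ coefC coefX; case: j hj => [|[|j]] //= _; by rewrite mulr0 addr0.
rewrite exprSr; split.
- by rewrite cq /= IH1 (IH3 n.+2) // mulr0 addr0 -exprS.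
- rewrite cq /= IH1 IH2 mulrS exprS; ring.
- move=> [|j] //= hj; rewrite cq /= !IH3 ?mulr0 ?addr0 //; exact: ltnW.
Qed.

Lemma frac_coprime (K : fieldType) (h : ratfun K) :
  exists u v : {poly K}, [/\ v != 0, coprimep u v & h = polyF u / polyF v].
Proof.
have : exists n d : {poly K}, d != 0 /\ h = (FracField.tofrac n) / (FracField.tofrac d).
  elim/quotW: h => r.
  exists (\n_r), (\d_r); split; first exact: denom_ratioP.
  unlock FracField.tofrac.
  rewrite -[_^-1]/(FracField.inv _) -[_ * _]/(FracField.mul _ _).
  rewrite -!FracField.pi_inv -!FracField.pi_mul; apply/eqmodP => /=.
  rewrite FracField.equivfE /FracField.invf /FracField.mulf.
  rewrite !numden_Ratio ?oner_neq0 ?denom_ratioP ?mulr1 ?mul1r //.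
  1: by rewrite mulrC.
  1,2: exact: denom_ratioP.


move=> [n [d [d0 ->]]].
have g0 : gcdp n d != 0 by rewrite gcdp_eq0 negb_and d0 orbT.
have en := divpK (dvdp_gcdl n d); have ed := divpK (dvdp_gcdr n d).
exists (n %/ gcdp n d), (d %/ gcdp n d); split.
- by apply: contraNneq d0 => e0; rewrite -ed e0 mul0r.
- by apply: coprimep_div_gcd; rewrite d0 orbT.
- rewrite /polyF.
  have -> : FracField.tofrac n = FracField.tofrac (n %/ gcdp n d) * FracField.tofrac (gcdp n d) by rewrite -rmorphM en.
  have -> : FracField.tofrac d = FracField.tofrac (d %/ gcdp n d) * FracField.tofrac (gcdp n d) by rewrite -rmorphM ed.
  have h2 : FracField.tofrac (gcdp n d) != 0 by rewrite tofrac_eq0.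
  by rewrite invfM mulrACA divff // mulr1.
Qed.

Lemma aux2 (F : fieldType) (x y z w : F) : z != 0 -> x * (y / z) * (z * w) = x * (y * w).
Proof. by move=> z0; rewrite mulrA mulrA divfK // mulrA. Qed.

Lemma compF_hom (K : fieldType) (f : {poly K}) d (a b c e : K) :
  c != 0 -> (size f <= d.+1)%N ->
  compF f (mobius a b c e) * polyF (c *: 'X + e%:P) ^+ d =
  polyF (\sum_(i < d.+1) f`_i *: ((a *: 'X + b%:P) ^+ i * (c *: 'X + e%:P) ^+ (d - i))).
Proof.
move=> c0 sf.
set A := a *: 'X + b%:P; set B := c *: 'X + e%:P.
have B0 : polyF B != 0.
  rewrite /polyF tofrac_eq0; apply: contraNneq c0 => eB.
  by have := congr1 (fun q : {poly K} => q`_1) eB; rewrite /B coefD coefZ coefX coefC /= mulr1 addr0 coef0 => ->.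
rewrite /compF /mobius -/A -/B (horner_coef_wide _ (n := d.+1)); last first.
  by rewrite /map_poly; apply: leq_trans (size_poly _ _) _.
rewrite /polyF /constF in B0 *. rewrite mulr_suml rmorph_sum; apply: eq_bigr => i _.
rewrite coef_map_id0; last by rewrite /constF /polyF rmorph0.
have hi : (i <= d)%N by rewrite -ltnS.
rewrite -mul_polyC rmorphM rmorphM !rmorphXn /=.
rewrite /polyF expr_div_n (_ : FracField.tofrac B ^+ d = FracField.tofrac B ^+ i * FracField.tofrac B ^+ (d - i)); last by rewrite -exprD subnKC.
by apply: aux2; exact: expf_neq0.
Qed.

Lemma aux_id (F : fieldType) (L U V W : F) n : V != 0 ->
  (L + (U / V) ^+ n.+1 - U / V) * W * V ^+ n.+1 =
  W * (L * V ^+ n.+1 + U ^+ n.+1 - U * V ^+ n).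
Proof.
move=> V0; rewrite mulrAC mulrC; congr (W * _).
rewrite mulrBl mulrDl expr_div_n divfK ?expf_neq0 //; congr (_ + _ - _).
by rewrite exprSr mulrA mulrAC divfK.
Qed.

Lemma case_c_neq0 (K : fieldType) p d (a b c e lam : K) (h : ratfun K) (f f' : {poly K}) :
  (1 < p)%N -> ~~ (p %| d)%N -> c != 0 -> a * e - b * c != 0 ->
  size f = d.+1 -> f`_d = 1 ->
  compF f (mobius a b c e) = constF lam * polyF f' + h ^+ p - h -> False.
Proof.
move=> p1 pd c0 det sf fd heq.
have d0 : (0 < d)%N by case: d pd {sf fd heq} => //; rewrite dvdn0.
have [u [v [v0 cuv eh]]] := @frac_coprime _ h.
have hP := @compF_hom _ f d a b c e c0 (eq_leq sf).
move: hP; set A := a *: 'X + b%:P; set B := c *: 'X + e%:P; set P := \sum_(i < d.+1) _ => hP.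
set r := - e / c.
have hBr : B.[r] = 0 by rewrite /B hornerD hornerZ hornerX hornerC /r mulrC divfK // addNr.
have hAr : A.[r] != 0.
  rewrite /A hornerD hornerZ hornerX hornerC /r; apply: contraNneq det => h0.
  have -> : a * e - b * c = - c * (a * (- e / c) + b) by field.
  by rewrite h0 mulr0.
have hPr : P.[r] = A.[r] ^+ d.
  rewrite /P horner_sum big_ord_recr /= big1 ?add0r.
    by rewrite hornerZ hornerM !horner_exp fd mul1r subnn expr0 mulr1.
  move=> i _; rewrite hornerZ hornerM !horner_exp hBr expr0n.
  by rewrite subn_eq0 leqNgt ltn_ord /= mulr0 mulr0.
case: p p1 pd heq => [|p'] // p1 pd heq.
set Q := lam%:P * f' * v ^+ p'.+1 + u ^+ p'.+1 - u * v ^+ p'.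
have key : P * v ^+ p'.+1 = B ^+ d * Q.
  apply/eqP; rewrite -tofrac_eq; apply/eqP.
  move: hP heq; rewrite eh /constF /polyF => hP heq.
  rewrite tofracM -hP heq /Q !(tofracM, tofracXn, tofracB, tofracD).
  apply: aux_id; by rewrite tofrac_eq0.
have [m [w wr ev]] := multiplicity_XsubC v r.
have wr' : ~~ root w r := implyP wr v0.
set Z := 'X - r%:P.
have Z0 : Z != 0 by rewrite polyXsubC_eq0.
have hZr : Z.[r] = 0 by rewrite hornerXsubC subrr.
have eB : B = c%:P * Z.
  rewrite /B /Z mulrBr mul_polyC -polyCM.
  have -> : c * r = - e by rewrite /r; field.
  by rewrite polyCN opprK.
move: key; rewrite ev eB !exprMn -exprM => key.
have wr0 : w.[r] != 0 by [].
have Pr0 : P.[r] != 0 by rewrite hPr expf_neq0.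
case: (ltngtP (m * p'.+1) d) => hN.
- have eZ : Z ^+ d = Z ^+ (d - m * p'.+1) * Z ^+ (m * p'.+1) by rewrite -exprD subnK // ltnW.
  have key2 : P * w ^+ p'.+1 * Z ^+ (m * p'.+1) =
      (c%:P ^+ d * Q * Z ^+ (d - m * p'.+1)) * Z ^+ (m * p'.+1).
    transitivity (P * (w ^+ p'.+1 * Z ^+ (m * p'.+1))); first by rewrite mulrA.
    rewrite key eZ; ring.
  have := congr1 (fun q => q.[r]) (mulIf (expf_neq0 _ Z0) key2).
  rewrite /= !hornerM !horner_exp hZr expr0n subn_eq0 leqNgt hN /= mulr0 => /eqP.
  by rewrite mulf_eq0 (negbTE Pr0) expf_eq0 (negbTE wr0) andbF.
- have eZ : Z ^+ (m * p'.+1) = Z ^+ (m * p'.+1 - d) * Z ^+ d by rewrite -exprD subnK // ltnW.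
  have key2 : P * w ^+ p'.+1 * Z ^+ (m * p'.+1 - d) * Z ^+ d =
      (c%:P ^+ d * Q) * Z ^+ d.
    transitivity (P * (w ^+ p'.+1 * Z ^+ (m * p'.+1))); first by rewrite eZ; ring.
    rewrite key; ring.
  have := congr1 (fun q => q.[r]) (mulIf (expf_neq0 _ Z0) key2).
  rewrite /= !hornerM !horner_exp hZr expr0n subn_eq0 leqNgt hN /= mulr0 => /esym /eqP.
  rewrite mulf_eq0 expf_eq0 hornerC (negbTE c0) andbF /= => /eqP Qr.
  have m0 : (0 < m)%N by move: hN; case: m {ev key key2 eZ}.
  have vr : v.[r] = 0 by rewrite ev hornerM horner_exp hZr expr0n (negbTE (lt0n_neq0 m0)) mulr0.
  move: Qr; rewrite /Q !(hornerD, hornerM, hornerN, horner_exp) vr !expr0n /= mulr0.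
  rewrite add0r (_ : (p' == 0%N) = false) ?mulr0 ?subr0; last by move: p1; clear; case: p'.
  move/eqP; rewrite expf_eq0 /= => ur.
  by have := coprimep_root cuv ur; rewrite vr eqxx.
- by move: pd; rewrite -hN dvdn_mull.
Qed.

Lemma Hpow (K : idomainType) (H : {poly K}) p : (1 < p)%N -> (1 < size H)%N ->
  (H ^+ p - H)`_((size H).-1 * p) = lead_coef H ^+ p /\
  forall j, ((size H).-1 * p < j)%N -> (H ^+ p - H)`_j = 0.
Proof.
move=> p1 sH.
have H0 : H != 0 by rewrite -size_poly_gt0 ltnW.
have sHp : size (H ^+ p) = ((size H).-1 * p).+1.
  by rewrite -size_exp prednK // size_poly_gt0 expf_neq0.
have sHn : (size H <= (size H).-1 * p)%N.
  move: sH p1; case: (size H) => [|s] //= s1 p1; nia.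
split.
- rewrite coefB (nth_default _ sHn) subr0 -lead_coef_exp lead_coefE sHp.
  done.
- move=> j hj; rewrite coefB !nth_default ?subr0 //.
    by apply: leq_trans (ltnW hj).
  by rewrite sHp.
Qed.

Lemma aux4 (V : zmodType) (x y z : V) : x + y - z - x = y - z.
Proof. by rewrite addrC !addrA addNr add0r. Qed.

Lemma case_c0 (K : closedFieldType) p d (a b e lam : K) (h : ratfun K) (F F' : {poly K}) :
  prime p -> p \in [pchar K] -> (3 <= d)%N -> ~~ (p %| d)%N -> (d %% p != 1)%N ->
  (size F <= d.-1)%N -> (size F' <= d.-1)%N ->
  (forall i : nat, (p %| i)%N -> F`_i = 0) ->
  (forall i : nat, (p %| i)%N -> F'`_i = 0) ->
  a * e != 0 ->
  compF ('X^d + F) (mobius a b 0 e) = constF lam * polyF ('X^d + F') + h ^+ p - h ->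
  b = 0 /\ lam = (a / e) ^+ d /\ exists c0 : K, c0 ^+ p = c0 /\ h = constF c0.
Proof.
move=> pp pc d3 pd dp1 sF sF' hFp hF'p ae heq.
have a0 : a != 0 by apply: contraNneq ae => ->; rewrite mul0r.
have e0 : e != 0 by apply: contraNneq ae => ->; rewrite mulr0.
have p1 : (1 < p)%N := prime_gt1 pp.
set al := a / e; set be := b / e; set q := al *: 'X + be%:P.
have al0 : al != 0 by rewrite mulf_neq0 ?invr_eq0.
have hm : mobius a b 0 e = polyF q.
  rewrite /mobius scale0r add0r.
  have -> : a *: 'X + b%:P = q * e%:P.
    rewrite mulrC mul_polyC scalerDr scalerA scale_polyC /al /be.
    by rewrite ![e * (_ / e)]mulrC !divfK.
  by rewrite /polyF tofracM mulfK // tofrac_eq0 polyC_eq0.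
move: heq; rewrite hm compF_polyF; set f := 'X^d + F; set f' := 'X^d + F' => heq.
have [p' ep] : exists p', p = p'.+1 by exists p.-1; rewrite prednK // ltnW.
have [H eH] : exists H : {poly K}, h = polyF H.
  have [u [v [v0 cuv eh]]] := @frac_coprime _ h.
  have key : (f \Po q) * v ^+ p = lam%:P * f' * v ^+ p + u ^+ p - u * v ^+ p'.
    apply/eqP; rewrite -tofrac_eq; apply/eqP.
    move: heq; rewrite eh ep /constF /polyF => heq.
    have V0 : FracField.tofrac v != 0 by rewrite tofrac_eq0.
    rewrite tofracM tofracXn heq.
    have := @aux_id _ (FracField.tofrac (lam%:P) * FracField.tofrac f') (FracField.tofrac u) (FracField.tofrac v) 1 p' V0.
    rewrite mulr1 mul1r => ->.
    by rewrite !(tofracM, tofracXn, tofracB, tofracD).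
  case: (boolP (size v == 1)) => [/size_poly1P [v1 v10 ev] | sv].
    exists (v1^-1 *: u); rewrite eh ev /polyF -mul_polyC rmorphM mulrC; congr (_ * _).
    by apply: mulr1_eq; rewrite -rmorphM -polyCM divff // rmorph1.
  have [r rr] := closed_rootP v sv.
  have := congr1 (fun s => s.[r]) key.
  rewrite /= !(hornerD, hornerM, hornerN, horner_exp) (rootP rr) !expr0n ep /= !mulr0 add0r.
  rewrite (_ : (p' == 0%N) = false) ?mulr0 ?subr0; last by move: p1; rewrite ep; clear; case: p'.
  move/esym/eqP; rewrite expf_eq0 /= => ur.
  by have := coprimep_root cuv ur; rewrite (rootP rr) eqxx.
have eG : f \Po q - lam%:P * f' = H ^+ p - H.
  apply/eqP; rewrite -tofrac_eq; apply/eqP.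
  move: heq; rewrite eH /constF /polyF => heq.
  rewrite tofracB heq tofracM !(tofracB, tofracXn).
  by rewrite aux4.
have [dd ed] : exists dd, d = dd.+2 by exists (d - 2)%N; lia.
subst d.
have sq : (size q <= 2)%N.
  rewrite /q; apply: leq_trans (size_add _ _) _; rewrite geq_max.
  rewrite (leq_trans (size_scale_leq _ _)) ?size_polyX //.
  exact: leq_trans (size_polyC_leq1 _) _.
have sFq : (size (F \Po q) <= dd.+1)%N.
  apply: leq_trans (size_comp_poly_leq _ _) _; move: sq sF; simpl; nia.
set G := f \Po q - lam%:P * f'.
have cG : forall j, G`_j = (q ^+ dd.+2)`_j + (F \Po q)`_j - lam * ((j == dd.+2)%:R + F'`_j).
  by move=> j; rewrite /G /f /f' comp_polyD comp_Xn_poly coefB coefD coefCM coefD coefXn.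
have [L1 L2 L3] := @lin_exp _ al be dd.+1.
have Gd : G`_dd.+2 = al ^+ dd.+2 - lam.
  by rewrite cG L1 eqxx (nth_default _ (leq_trans sFq (leqnSn _))) (nth_default _ (leq_trans sF' (leqnSn _))) /= mulr1n !addr0 mulr1.
have Gd1 : G`_dd.+1 = dd.+2%:R * al ^+ dd.+1 * be.
  rewrite cG L2 (nth_default _ sFq) (nth_default _ sF') /=.
  by rewrite (ltn_eqF (ltnSn dd.+1)) /= !addr0 mulr0 subr0.
have Gj : forall j, (dd.+2 < j)%N -> G`_j = 0.
  move=> j hj.
  have j1 : (size (F \Po q) <= j)%N by apply: leq_trans sFq (ltnW (ltnW hj)).
  have j2 : (size F' <= j)%N by apply: leq_trans sF' (ltnW (ltnW hj)).
  have j3 : (j == dd.+2) = false by apply/negbTE; rewrite neq_ltn hj orbT.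
  by rewrite cG (L3 _ hj) (nth_default _ j1) (nth_default _ j2) j3 /= !addr0 mulr0 subr0.
have Gp : be = 0 -> forall j, (p %| j)%N -> G`_j = 0.
  move=> be0 j pj.
  have jd : (j == dd.+2) = false by apply: contraNF pd => /eqP <-.
  rewrite cG jd hF'p // addr0 mulr0 subr0.
  have eq : q = al *: 'X by rewrite /q be0 addr0.
  rewrite eq exprZn coefZ coefXn jd mulr0 add0r coef_comp_poly.
  apply: big1 => i _; rewrite exprZn coefZ coefXn.
  case: eqP => [ji | _]; first by rewrite -ji (hFp _ pj) mul0r.
  by rewrite /= !mulr0.
have d0 : (dd.+2)%:R != 0 :> K by rewrite -(dvdn_pcharf pc).
case: (ltnP 1 (size H)) => sH.
  exfalso.
  have [Hn HJ] := @Hpow _ H p p1 sH.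
  set n := ((size H).-1 * p)%N in Hn HJ.
  have pn : (p %| n)%N by rewrite dvdn_mull.
  have lc0 : lead_coef H ^+ p != 0.
    by rewrite expf_neq0 // lead_coef_eq0 -size_poly_gt0 ltnW.
  have nle : (n <= dd.+2)%N.
    rewrite leqNgt; apply/negP => hn; move: lc0; rewrite -Hn -eG Gj //; by rewrite eqxx.
  have nd : n != dd.+2 by apply: contraNneq pd => <-.
  have nd1 : n != dd.+1.
    apply: contraNneq dp1 => en; rewrite -en -addn1 -modnDml (eqP pn) add0n modn_small //.
  have nlt : (n < dd.+1)%N.
    by move: nle; rewrite leq_eqVlt (negbTE nd) /= ltnS leq_eqVlt (negbTE nd1).
  have : G`_dd.+2 = 0 by rewrite /G eG HJ // leqW.
  have : G`_dd.+1 = 0 by rewrite /G eG HJ //.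
  rewrite Gd1 => /eqP; rewrite mulf_eq0 mulf_eq0 (negbTE d0) expf_eq0 (negbTE al0) andbF /= => /eqP be0 _.
  by move: lc0; rewrite -Hn -eG (Gp be0 _ pn) eqxx.
have eHc := size1_polyC sH; set c0 := H`_0 in eHc.
have eG' : G = (c0 ^+ p - c0)%:P by rewrite /G eG eHc polyCB rmorphXn.
have G0 : forall j, (0 < j)%N -> G`_j = 0 by move=> j hj; rewrite eG' coefC; case: j hj.
have lamE : lam = al ^+ dd.+2.
  by apply/esym/eqP; rewrite -subr_eq0 -Gd G0.
have be0 : be = 0.
  move: (G0 _ (ltn0Sn dd)); rewrite Gd1 => /eqP; rewrite mulf_eq0 mulf_eq0 (negbTE d0) expf_eq0 (negbTE al0) andbF /=.
  by move/eqP.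
split; [|split] => //.
- by move: be0; rewrite /be => /eqP; rewrite mulf_eq0 invr_eq0 (negbTE e0) orbF => /eqP.
- exists c0; split.
    by apply/eqP; rewrite -subr_eq0; move: (Gp be0 0%N (dvdn0 _)); rewrite eG' coefC /= => ->.
  by rewrite eH eHc.
Qed.


Theorem proposition4p2
  (p : nat) (K : closedFieldType)
  (hp : prime p) (hp_odd : odd p) (hchar : p \in [pchar K])
  (halg : forall x : K, exists n : nat, (0 < n)%N /\ x ^+ (p ^ n) = x)
  (d : nat) (hd3 : (3 <= d)%N) (hpd : ~~ (p %| d)%N) (hd1 : (d %% p != 1)%N)
  (F F' : {poly K})
  (hF : (size F <= d.-1)%N) (hF' : (size F' <= d.-1)%N)
  (hFp : forall i : nat, (p %| i)%N -> F`_i = 0)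
  (hF'p : forall i : nat, (p %| i)%N -> F'`_i = 0)
  (a b c e lam : K) (h : ratfun K)
  (htr : transforms p a b c e lam h ('X^d + F) ('X^d + F')) :
  c = 0 /\ b = 0 /\ lam = (a / e) ^+ d /\ (a / e) ^+ (d * (p - 1)) = 1 /\
  exists c0 : K, c0 ^+ p = c0 /\ h = constF c0.
Proof.
case: htr => det lam0 lamp heq.
have pp1 := prime_gt1 hp.
case: (eqVneq c 0) => [c0 | c0].
  subst c; rewrite mulr0 subr0 in det.
  have [b0 [lamE [c0' [hc0 eh]]]] :=
    @case_c0 K p d a b e lam h F F' hp hchar hd3 hpd hd1 hF hF' hFp hF'p det heq.
  split => //; split => //; split => //; split; last by exists c0'.
  rewrite exprM -lamE; apply: (mulIf lam0).
  by rewrite mul1r -exprSr subn1 prednK ?prime_gt0.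
exfalso.
have sf : size ('X^d + F) = d.+1.
  rewrite size_addl ?size_polyXn //; apply: leq_ltn_trans hF _.
  by rewrite ltnS leq_pred.
have fd : ('X^d + F)`_d = 1.
  by rewrite coefD coefXn eqxx (nth_default _ (leq_trans hF (leq_pred d))) addr0.
exact: (@case_c_neq0 K p d a b c e lam h ('X^d + F) ('X^d + F') pp1 hpd c0 det sf fd heq).
Qed.
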